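(* Let $m=n+1$. Then every instance with $n$ agents with monotone valuations and $m$ goods has at least $n$ EFX allocations, and there exists an instance with $n$ agents with additive valuations and $m$ goods that has exactly $n$ EFX allocations. *)

(* Defs.v *)
From HB Require Import structures.
From mathcomp Require Import all_boot all_order all_algebra.
Set Implicit Arguments. Unset Strict Implicit. Unset Printing Implicit Defensive.
Import Order.TTheory GRing.Theory Num.Theory.
Local Open Scope ring_scope.

(* agents are 'I_n, goods are 'I_m; valuations take values in a real field R *)
Definition valuations (R : realFieldType) (n m : nat) := 'I_n -> {set 'I_m} -> R.

Definition monotone_vals (R : realFieldType) n m (v : valuations R n m) : Prop :=
  forall i, v i set0 = 0 /\ forall S T : {set 'I_m}, S \subset T -> v i S <= v i T.

Definition additive_vals (R : realFieldType) n m (v : valuations R n m) : Prop :=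
  exists w : 'I_n -> 'I_m -> R,
    (forall i g, 0 <= w i g) /\
    forall i (S : {set 'I_m}), v i S = \sum_(g in S) w i g.

(* a (complete) allocation assigns each good to exactly one agent *)
Definition allocation n m := {ffun 'I_m -> 'I_n}.

Definition bundle n m (a : allocation n m) (i : 'I_n) : {set 'I_m} :=
  [set g | a g == i].

Definition EFX (R : realFieldType) n m (v : valuations R n m) (a : allocation n m) : bool :=
  [forall i : 'I_n, forall j : 'I_n, forall g : 'I_m,
     (g \in bundle a j) ==> (v i (bundle a j :\ g) <= v i (bundle a i))].

Definition num_EFX (R : realFieldType) n m (v : valuations R n m) : nat :=
  #|[set a : allocation n m | EFX v a]|.

(* Main.v *)
Require Import Defs.
From mathcomp Require Import all_boot all_order all_algebra.
From mathcomp Require Import lra.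
Import Order.TTheory GRing.Theory Num.Theory.
Local Open Scope ring_scope.

Lemma pick_lemma (R : realFieldType) n m (v : valuations R n m)
  (s : seq 'I_n) (G : {set 'I_m}) : uniq s -> #|G| = (size s).+2 ->
  exists f : 'I_n -> 'I_m,
    [/\ {in s, forall x, f x \in G}, {in s &, injective f},
     #|[set g in G | all (fun y => f y != g) s]| = 2%N &
     {in s, forall x g, g \in G -> all (fun y => f y != g) s ->
        v x [set g] <= v x [set f x]}].
Proof.
elim: s G => [|x s IH] G /= Hu HG.
  have : (0 < #|G|)%N by rewrite HG.
  case/card_gt0P=> g0 _; exists (fun _ => g0); split => //.
  rewrite -HG (_ : [set g in G | _] = G) //; by apply/setP=> g; rewrite inE andbT.
case/andP: Hu => xs us.
have : (0 < #|G|)%N by rewrite HG.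
case/card_gt0P=> g0 g0G.
case: (@arg_maxP _ R _ g0 (mem G) (fun g => v x [set g]) g0G) => gm gmG gmax.
have gmG' : gm \in G := gmG.
have HG' : #|G :\ gm| = (size s).+2 by have := cardsD1 gm G; rewrite HG gmG' add1n => -[].
have [f' [f'G f'inj f'L f'pref]] := IH _ us HG'.
pose f y := if y == x then gm else f' y.
have fx : f x = gm by rewrite /f eqxx.
have fs : {in s, forall y, f y = f' y}.
  by move=> y ys; rewrite /f; case: eqP => // E; move: xs; rewrite -E ys.
have f'ne : {in s, forall y, f' y != gm}.
  by move=> y ys; have := f'G y ys; rewrite !inE => /andP[].
have Lset : forall g, (g \in G) && ((f x != g) && all (fun y => f y != g) s)
   = (g \in G :\ gm) && all (fun y => f' y != g) s.
  move=> g; rewrite fx inE.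
  rewrite (@eq_in_all _ _ (fun y => f' y != g)); last by move=> y ys; rewrite fs.
  rewrite [gm == g]eq_sym inE; by case: (g == gm); case: (g \in G).
exists f; split.
- move=> y; rewrite inE => /orP[/eqP->|ys]; first by rewrite fx.
  by rewrite fs //; have := f'G y ys; rewrite inE => /andP[].
- move=> y z; rewrite !inE => /orP[/eqP->|ys] /orP[/eqP->|zs] //.
  + rewrite fx fs // => E; by move: (f'ne z zs); rewrite -E eqxx.
  + rewrite fx fs // => E; by move: (f'ne y ys); rewrite E eqxx.
  + by rewrite !fs //; apply: f'inj.
- rewrite -f'L (_ : [set g in G | _] = [set g in G :\ gm | all (fun y => f' y != g) s]) //.
  by apply/setP=> g; rewrite !inE; have := Lset g; rewrite !inE.
- move=> y; rewrite inE => /orP[/eqP->|ys] g gG /andP[fxg allg].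
  + by rewrite fx; apply: gmax.
  + rewrite fs //; have := Lset g; rewrite gG fxg allg /= => /esym/andP[H1 H2].
    exact: f'pref.
Qed.

Lemma lower (R : realFieldType) n (v : valuations R n n.+1) :
  monotone_vals v -> (n <= num_EFX v)%N.
Proof.
move=> mon.
have key : forall j : 'I_n, exists a : allocation n n.+1,
  [&& EFX v a, #|bundle a j| == 2%N & [forall k, (k != j) ==> (#|bundle a k| <= 1)%N]].
  move=> j.
  pose s := enum [set~ j].
  have Hs : forall y, (y \in s) = (y != j) by move=> y; rewrite mem_enum in_setC1.
  have n0 : (0 < n)%N := leq_ltn_trans (leq0n j) (ltn_ord j).
  have [f [fG finj fL fpref]] : exists f : 'I_n -> 'I_n.+1,
    [/\ {in s, forall x, f x \in [set: 'I_n.+1]}, {in s &, injective f},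
     #|[set g in [set: 'I_n.+1] | all (fun y => f y != g) s]| = 2%N &
     {in s, forall x g, g \in [set: 'I_n.+1] -> all (fun y => f y != g) s ->
        v x [set g] <= v x [set f x]}].
    apply: pick_lemma; first exact: enum_uniq.
    by rewrite -cardE cardsC1 cardsT !card_ord prednK.
  pose a : allocation n n.+1 :=
    [ffun g => if [pick y in [set~ j] | f y == g] is Some y then y else j].
  have A1 : forall k, k != j -> a (f k) = k.
    move=> k kj; rewrite ffunE; case: pickP => [y /andP[yj /eqP fy]|H].
      by apply: finj => //; rewrite Hs // -in_setC1.
    by have := H k; rewrite in_setC1 kj eqxx.
  have A2 : forall g k, a g = k -> k != j -> g = f k.
    move=> g k; rewrite ffunE; case: pickP => [y /andP[_ /eqP fy]|_] E.
      by rewrite -E fy.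
    by rewrite E eqxx.
  have A3 : forall g, (a g == j) = all (fun y => f y != g) s.
    move=> g; rewrite ffunE; case: pickP => [y /andP[yj /eqP fy]|H].
      move: (yj); rewrite in_setC1 => /negbTE ->; apply/esym/negbTE.
      by apply/allPn; exists y; [rewrite Hs -in_setC1 | rewrite fy negbK].
    rewrite eqxx; apply/esym/allP => y; rewrite Hs => yj.
    by have := H y; rewrite in_setC1 yj /= => ->.
  have Bj : bundle a j = [set g in [set: 'I_n.+1] | all (fun y => f y != g) s].
    by apply/setP => g; rewrite !inE A3.
  have Bk : forall k, k != j -> bundle a k = [set f k].
    move=> k kj; apply/setP => g; rewrite !inE.
    apply/eqP/eqP => [E|->]; [exact: A2 | exact: A1].
  exists a; apply/and3P; split.
  - apply/forallP => i; apply/forallP => k; apply/forallP => g; apply/implyP => gk.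
    case: (eqVneq k j) => [Ek | kj].
    + subst k; case: (eqVneq i j) => [-> | ij].
        by apply: (mon j).2; apply: subD1set.
      have : #|bundle a j :\ g| == 1%N.
        have H1 : #|bundle a j| = (1 + #|bundle a j :\ g|)%N by rewrite (cardsD1 g) gk.
        by move: H1; rewrite {1}Bj fL; case=> ->.
      case/cards1P => g' E.
      have g'L : g' \in bundle a j.
        have : g' \in bundle a j :\ g by rewrite E set11.
        by rewrite inE => /andP[].
      rewrite E Bk //; apply: fpref; first by rewrite Hs.
        by [].
      by move: g'L; rewrite Bj !inE.
    + move: gk; rewrite Bk // inE => /eqP ->; rewrite setDv (mon i).1.
      by rewrite -(mon i).1; apply: (mon i).2; apply: sub0set.
  - by rewrite Bj fL.
  - apply/forallP => k; apply/implyP => kj; by rewrite Bk // cards1.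
have [A HA] := fin_all_exists key.
have Ainj : injective A.
  move=> j1 j2 E; apply/eqP; apply: contraT => ne.
  have /and3P[_ _ /forallP/(_ j2)] := HA j1; rewrite eq_sym ne /= E.
  by have /and3P[_ /eqP -> _] := HA j2.
rewrite /num_EFX; apply: (@leq_trans #|[set A j | j : 'I_n]|); first by rewrite card_imset // card_ord.
apply: subset_leq_card; apply/subsetP => a /imsetP[j _ ->].
by rewrite inE; have /and3P[] := HA j.
Qed.

Section Inst.
Variable (R : realFieldType) (n : nat).

Definition w0 (i : 'I_n) (g : 'I_n.+1) : R :=
  if g == lift ord_max i then 2 *+ n.+2 else if g == ord_max then 2 else 1.

Definition v0 : valuations R n n.+1 := fun i S => \sum_(g in S) w0 i g.

Lemma w0_ge0 i g : 0 <= w0 i g.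
Proof. by rewrite /w0; case: ifP => _; [|case: ifP => _]; rewrite ?ler0n ?mulrn_wge0 ?ler01. Qed.

Lemma w0_le i g : g != lift ord_max i -> w0 i g <= 2.
Proof. by rewrite /w0 => /negbTE ->; case: ifP => _ //; rewrite ler1n. Qed.

Lemma v0_mono i (S T : {set 'I_n.+1}) : S \subset T -> v0 i S <= v0 i T.
Proof.
move=> ST; rewrite /v0 [X in _ <= X](big_setID S) /= (setIidPr ST) lerDl.
by apply: sumr_ge0 => g _; apply: w0_ge0.
Qed.

Lemma v0_ge i g (S : {set 'I_n.+1}) : g \in S -> w0 i g <= v0 i S.
Proof.
move=> gS; rewrite /v0 (big_setD1 g gS) /= lerDl.
by apply: sumr_ge0 => h _; apply: w0_ge0.
Qed.

Lemma v0_lt i (S : {set 'I_n.+1}) : lift ord_max i \notin S -> v0 i S < 2 *+ n.+2.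
Proof.
move=> iS; apply: (@le_lt_trans _ _ (v0 i ([set: 'I_n.+1] :\ lift ord_max i))).
  by apply: v0_mono; apply/subsetP => g gS; rewrite !inE andbT; apply: contraNneq iS => <-.
apply: (@le_lt_trans _ _ (\sum_(g in [set: 'I_n.+1] :\ lift ord_max i) 2)).
  by apply: ler_sum => g; rewrite !inE andbT; apply: w0_le.
have Hc : #|[set: 'I_n.+1] :\ lift ord_max i| = n.
  by have := cardsD1 (lift ord_max i) [set: 'I_n.+1]; rewrite cardsT card_ord in_setT => -[].
rewrite sumr_const Hc !mulrS; lra.
Qed.

Local Notation gd := (lift (@ord_max n)).

Lemma efx_fix (a : allocation n n.+1) : EFX v0 a -> forall i, a (lift ord_max i) = i.
Proof.
move=> Ha.
have efx : forall i k g, g \in bundle a k -> v0 i (bundle a k :\ g) <= v0 i (bundle a i).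
  move=> i k g gk; move: Ha => /forallP/(_ i)/forallP/(_ k)/forallP/(_ g)/implyP; exact.
have inB : forall g k, (g \in bundle a k) = (a g == k) by move=> g k; rewrite inE.
have L1 : forall i k, a (gd i) = k -> k != i -> forall h, a h = k -> h = gd i.
  move=> i k aik ki h ahk; apply/eqP; apply: contraT => hne.
  have := efx i k h; rewrite inB ahk eqxx => /(_ isT) H.
  have H1 : 2 *+ n.+2 <= v0 i (bundle a k :\ h).
    have := v0_ge i (gd i) (bundle a k :\ h).
    by rewrite !inE eq_sym hne aik eqxx /w0 eqxx => /(_ isT).
  have H2 : v0 i (bundle a i) < 2 *+ n.+2 by apply: v0_lt; rewrite inB aik.
  have := le_lt_trans H1 (le_lt_trans H H2); by rewrite ltxx.
pose S := [set i | a (gd i) != i].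
pose f i := a (gd i).
have fS : {in S, forall i, f i \in S}.
  move=> i; rewrite !inE => iS; apply/eqP => E.
  have := L1 i (f i) erefl iS (gd (f i)) E => /lift_inj E2.
  by move: iS; rewrite -/(f i) E2 eqxx.
have finj : {in S &, injective f}.
  move=> i i'; rewrite !inE => iS i'S E.
  by have := L1 i (f i) erefl iS (gd i') (esym E) => /lift_inj.
have sub : [set f i | i in S] \subset S.
  by apply/subsetP => k /imsetP[i iS ->]; apply: fS.
have eqS := subset_cardP (card_in_imset finj) sub.
have jS : a ord_max \notin S.
  apply/negP => jS; move: jS; rewrite -eqS => /imsetP[i' i'S Ej].
  have ji' : a ord_max != i' by rewrite Ej; move: i'S; rewrite inE.
  have := L1 i' (a ord_max) (esym Ej) ji' ord_max erefl => E.
  by move: (neq_lift ord_max i'); rewrite -E eqxx.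
have aj : a (gd (a ord_max)) = a ord_max by apply/eqP; move: jS; rewrite inE negbK.
move=> i; apply/eqP; apply: contraT => iS.
have iS' : i \in S by rewrite inE.
set k := f i.
have ki : k != i by [].
have Bk : bundle a k = [set gd i].
  apply/setP => g; rewrite inB inE; apply/eqP/eqP => [E|->]; last by [].
  exact: L1 i k erefl ki g E.
have := efx k (a ord_max) (gd (a ord_max)); rewrite inB aj eqxx => /(_ isT) H.
have H1 : w0 k ord_max <= v0 k (bundle a (a ord_max) :\ gd (a ord_max)).
  by apply: v0_ge; rewrite !inE neq_lift eqxx.
move: H1; rewrite /w0 (negbTE (neq_lift _ _)) eqxx => H1.
move: H; rewrite Bk /v0 big_set1 /w0.
have -> : (gd i == gd k) = false by apply/negbTE; apply: contra ki => /eqP/lift_inj ->.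
rewrite eq_sym (negbTE (neq_lift _ _)) => H.
have := le_trans H1 H; rewrite -subr_ge0; lra.
Qed.

End Inst.

Theorem proposition4 (R : realFieldType) (n m : nat) (hm : m = n.+1) :
  (forall v : valuations R n m, monotone_vals v -> (n <= num_EFX v)%N) /\
  (exists v : valuations R n m, additive_vals v /\ num_EFX v = n).
Proof.
subst m; split; first exact: lower.
exists (v0 R n); split.
  by exists (@w0 R n); split => // i g; apply: w0_ge0.
apply/eqP; rewrite eqn_leq; apply/andP; split; last first.
  apply: lower => i; split; first by rewrite /v0 big_set0.
  by move=> S T; apply: v0_mono.
have inj : {in [set a | EFX (v0 R n) a] &, injective (fun a : allocation n n.+1 => a ord_max)}.
  move=> a b; rewrite !inE => Ha Hb E; apply/ffunP => g.
  by case: (unliftP ord_max g) => [i ->|->] //; rewrite (@efx_fix R n a Ha) (@efx_fix R n b Hb).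
rewrite /num_EFX -(card_in_imset inj); apply: leq_trans (max_card _) _.
by rewrite card_ord.
Qed.
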